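(* Let $p,m,n\ge 1$ be integers, let $a_1,\dots,a_n\in\mathbb{C}$ be distinct, let $m_1,\dots,m_n\ge 1$ be integers, and let $C_0,\dots,C_{m-1}$ and $B_k^{(j)}$ ($1\le j\le n$, $1\le k\le m_j$) be complex $p\times p$ matrices. Consider the $p\times p$ rational matrix $$R(\lambda)=I\lambda^m-C_{m-1}\lambda^{m-1}-\cdots-C_1\lambda-C_0+\sum_{j=1}^{n}\sum_{k=1}^{m_j}\frac{B_k^{(j)}}{(\lambda-a_j)^k},$$ and let $\mathcal{C}_R$ be its associated block matrix (defined in the context). Then every eigenvalue of $R(\lambda)$ is an eigenvalue of $\mathcal{C}_R$.
   Context: A scalar $\lambda_0\in\mathbb{C}$ with $\lambda_0\notin\{a_1,\dots,a_n\}$ is an eigenvalue of $R(\lambda)$ if there is a nonzero $v\in\mathbb{C}^p$ with $R(\lambda_0)v=0$. Let $N=m+\sum_{j=1}^n \frac{m_j(m_j+1)}{2}$. The associated block matrix is the $pN\times pN$ matrix $$\mathcal{C}_R=\begin{bmatrix}\mathcal{A}_n&0&\cdots&0&-\mathcal{F}_n\\ 0&\mathcal{A}_{n-1}&\cdots&0&-\mathcal{F}_{n-1}\\ \vdots&&\ddots&&\vdots\\ 0&0&\cdots&\mathcal{A}_1&-\mathcal{F}_1\\ \mathcal{B}_n&\mathcal{B}_{n-1}&\cdots&\mathcal{B}_1&\mathcal{B}_0\end{bmatrix},$$ where, for $1\le j\le n$: $\mathcal{A}_j=\mathrm{diag}(\mathbf{A}^{(j)}_{m_j},\mathbf{A}^{(j)}_{m_j-1},\dots,\mathbf{A}^{(j)}_1)$,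 and $\mathbf{A}^{(j)}_k$ ($1\le k\le m_j$) is the $pk\times pk$ block matrix with $a_jI$ in each diagonal block, $I$ in each block of the block superdiagonal, and $0$ elsewhere; $\mathcal{F}_j$ is the block column $\begin{bmatrix}\mathbf{F}_{m_j}\\ \vdots\\ \mathbf{F}_1\end{bmatrix}$, where $\mathbf{F}_k$ is the $pk\times pm$ matrix, partitioned into $p\times p$ blocks, whose only nonzero block is $I$ in block position $(k,1)$ (last block row, first block column); $\mathcal{B}_j=\begin{bmatrix}\mathbf{B}^{(j)}_{m_j}&\mathbf{B}^{(j)}_{m_j-1}&\cdots&\mathbf{B}^{(j)}_1\end{bmatrix}$, where $\mathbf{B}^{(j)}_k$ is the $pm\times pk$ matrix, partitioned into $p\times p$ blocks, whose only nonzero block is $B^{(j)}_k$ in block position $(m,1)$; and $\mathcal{B}_0$ is the $pm\times pm$ block companion matrix with $I$ in each block of the block superdiagonal, last block row $\begin{bmatrix}C_0&C_1&\cdots&C_{m-1}\end{bmatrix}$, and $0$ elsewhere. *)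

(* Defs.v *)
(* Complex numbers are modelled as R[i] = complex R for an
   arbitrary R : realType (so C = R[i] with R the real numbers is the case of
   the paper). *)
From HB Require Import structures.
From mathcomp Require Import all_boot all_algebra.
From mathcomp Require Import complex reals.
Set Implicit Arguments. Unset Strict Implicit. Unset Printing Implicit Defensive.
Import GRing.Theory.
Local Open Scope ring_scope.

Section Defs.
Variable R : realType.
Local Notation C := (R[i]).

(* Data: paper index j (1 <= j <= n) is represented by j : 'I_n (j = paper j - 1).
   a j     : the pole a_{j+1}
   mj j    : the multiplicity m_{j+1}
   B j k   : the matrix B_k^{(j+1)}  (meaningful for 1 <= k <= mj j)
   Cc s    : the matrix C_s, s < m. *)

Definition Rmat (p m n : nat) (Cc : 'I_m -> 'M[C]_p) (a : 'I_n -> C)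
  (mj : 'I_n -> nat) (B : 'I_n -> nat -> 'M[C]_p) (lam : C) : 'M[C]_p :=
  lam ^+ m *: 1%:M - \sum_(s < m) lam ^+ s *: Cc s
  + \sum_(j < n) \sum_(1 <= k < (mj j).+1) (lam - a j) ^- k *: B j k.

Definition rat_eigenvalue (p m n : nat) (Cc : 'I_m -> 'M[C]_p) (a : 'I_n -> C)
  (mj : 'I_n -> nat) (B : 'I_n -> nat -> 'M[C]_p) (lam0 : C) : Prop :=
  (forall j, lam0 != a j) /\
  exists v : 'cV[C]_p, v != 0 /\ Rmat Cc a mj B lam0 *m v = 0.

(* The A-part lists, for j = n, n-1, ..., 1 and, inside, k = m_j, ..., 1,
   the k block rows of A^{(j)}_k: a triple (j, k, t) with 0 <= t < k stands
   for block row/column t+1 of A^{(j)}_k. *)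
Definition Apart (n : nat) (mj : 'I_n -> nat) : seq ('I_n * nat * nat) :=
  flatten [seq flatten [seq [seq (j, k, t) | t <- iota 0 k]
                        | k <- rev (iota 1 (mj j))]
          | j <- rev (enum 'I_n)].

Definition Nsize (m n : nat) (mj : 'I_n -> nat) : nat :=
  (m + \sum_(j < n) (mj j * (mj j).+1) %/ 2)%N.

Definition mxe (p : nat) (M : 'M[C]_p) (i i' : nat) : C :=
  match @insub _ (fun x => x < p)%N 'I_p i, @insub _ (fun x => x < p)%N 'I_p i' with
  | Some x, Some y => M x y
  | _, _ => 0
  end.

Definition idE (i i' : nat) : C := (i == i')%:R.

(* Scalar entry (i, i') (0 <= i, i' < p) of the p x p block in block position
   (r, c) of C_R; here r, c are block indices, 0 <= r, c < N.  Block indices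
   r < size (Apart mj) are described by the triple nth of Apart; the others
   belong to the last m block rows/columns (the F_j / B_j / B_0 part),
   indexed by s = r - size (Apart mj), 0 <= s < m. *)
Definition CRblock (p m n : nat) (Cc : 'I_m -> 'M[C]_p) (a : 'I_n -> C)
  (mj : 'I_n -> nat) (B : 'I_n -> nat -> 'M[C]_p)
  (r c i i' : nat) : C :=
  let L := Apart mj in
  let SA := size L in
  let desc x := nth None (map Some L) x in
  match desc r, desc c with
  | Some (j, k, t), Some (j', k', t') =>
      (* block diagonal part diag(A_n, ..., A_1);
         A^{(j)}_k: a_j I on the diagonal, I on the superdiagonal *)
      if (j == j') && (k == k') then
        if t' == t then a j * idE i i'
        else if t' == t.+1 then idE i i' else 0
      else 0
  | Some (j, k, t), None =>
      (* last block column: -F_j ; F_k has I in block (k, 1) *)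
      let s := (c - SA)%N in
      if (t == k.-1) && (s == 0%N) then - idE i i' else 0
  | None, Some (j, k, t) =>
      (* last block row: B_j ; B^{(j)}_k has B_k^{(j)} in block (m, 1) *)
      let s := (r - SA)%N in
      if (s == m.-1) && (t == 0%N) then mxe (B j k) i i' else 0
  | None, None =>
      (* B_0: block companion matrix, last block row [C_0 ... C_{m-1}] *)
      let s := (r - SA)%N in
      let s' := (c - SA)%N in
      if s == m.-1 then
        (if @insub _ (fun x => x < m)%N 'I_m s' is Some y then mxe (Cc y) i i' else 0)
      else if s' == s.+1 then idE i i' else 0
  end.

Definition CR (p m n : nat) (Cc : 'I_m -> 'M[C]_p) (a : 'I_n -> C)
  (mj : 'I_n -> nat) (B : 'I_n -> nat -> 'M[C]_p) : 'M[C]_(p * Nsize m mj) :=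
  \matrix_(r, c) CRblock Cc a mj B (r %/ p) (c %/ p) (r %% p) (c %% p).
End Defs.

(* Main.v *)
Require Import Defs.
From HB Require Import structures.
From mathcomp Require Import all_boot all_algebra.
From mathcomp Require Import complex reals.
From mathcomp Require Import ring zify.
Set Implicit Arguments. Unset Strict Implicit. Unset Printing Implicit Defensive.
Import GRing.Theory.
Local Open Scope ring_scope.

Lemma reindex_blocks (K : nzRingType) (p N : nat) (F : nat -> nat -> K) : (0 < p)%N ->
  \sum_(c < p * N) F (c %/ p)%N (c %% p)%N = \sum_(0 <= b < N) \sum_(i < p) F b i.
Proof.
move=> hp; rewrite -(big_mkord xpredT (fun c => F (c %/ p)%N (c %% p)%N)).
elim: N => [|N IH]; first by rewrite muln0 !big_geq.
rewrite big_nat_recr //= -IH mulnSr (big_cat_nat _ (n:=p*N)) ?leq_addr //=.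
congr (_ + _).
rewrite -{1}[(p*N)%N]add0n big_addn addKn big_mkord; apply: eq_bigr => i _.
rewrite [(i + _)%N]addnC [(p*N)%N]mulnC divnMDl // divn_small // addn0.
by rewrite modnMDl modn_small.
Qed.

Lemma sum_delta (K : nzRingType) (lo hi u : nat) (g : nat -> K) :
  \sum_(lo <= t < hi) (if t == u then g t else 0) = if (lo <= u < hi)%N then g u else 0.
Proof.
case: ifP => hu.
  rewrite (bigD1_seq u) ?mem_iota ?iota_uniq //=; last by lia.
  rewrite eqxx big1 ?addr0 // => t /negbTE ->; done.
rewrite big1_seq // => t /andP[_]; rewrite mem_iota; case: eqP => // -> h.
by move/negbT: hu; lia.
Qed.

Lemma sum_delta2 (K : nzRingType) (lo hi u : nat) (g : nat -> K) :
  (forall t, t != u -> g t = 0) ->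
  \sum_(lo <= t < hi) g t = if (lo <= u < hi)%N then g u else 0.
Proof.
move=> hg; rewrite -sum_delta; apply: eq_bigr => t _.
by case: eqP => [->|/eqP /hg].
Qed.

Section Main.
Variable R : realType.
Local Notation C := (R[i]).
Variables (p m n : nat) (Cc : 'I_m -> 'M[C]_p) (a : 'I_n -> C) (mj : 'I_n -> nat)
  (B : 'I_n -> nat -> 'M[C]_p).

Lemma sum_Apart (f : 'I_n * nat * nat -> C) :
  \sum_(q <- Apart mj) f q =
  \sum_(j < n) \sum_(1 <= k < (mj j).+1) \sum_(0 <= t < k) f (j, k, t).
Proof.
rewrite /Apart big_flatten big_map big_rev big_enum /=; apply: eq_bigr => j _.
rewrite big_flatten big_map big_rev /index_iota subSS subn0; apply: eq_bigr => k _.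
by rewrite big_map subn0.
Qed.

Lemma mem_Apart j k t : (j, k, t) \in Apart mj -> (1 <= k <= mj j)%N && (t < k)%N.
Proof.
case/flattenP=> s /mapP[j' _ ->] /flattenP[s' /mapP[k' hk ->]] /mapP[t' ht [-> -> ->]].
move: hk ht; rewrite mem_rev !mem_iota /=; lia.
Qed.

Lemma size_Apart : size (Apart mj) = (\sum_(j < n) (mj j * (mj j).+1) %/ 2)%N.
Proof.
rewrite /Apart size_flatten sumnE !big_map big_rev big_enum /=; apply: eq_bigr => j _.
rewrite size_flatten sumnE !big_map big_rev.
under eq_bigr do rewrite size_map size_iota.
have -> : (\sum_(i <- iota 1 (mj j)) i = \sum_(0 <= i < (mj j).+1) i)%N.
  rewrite big_nat_recl //= add0n /index_iota subn0 -[1%N]/(1 + 0)%N iotaDl big_map.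
  by apply: eq_bigr => i _; rewrite add1n.
have -> := bin2_sum (mj j).+1; by rewrite bin2 divn2 /= mulnC.
Qed.

Variables (lam : C) (v : 'cV[C]_p).
Hypothesis hp : (0 < p)%N.
Hypothesis hm : (0 < m)%N.
Hypothesis hmj : forall j, (1 <= mj j)%N.
Hypothesis hlam : forall j, lam != a j.
Hypothesis hv : Rmat Cc a mj B lam *m v = 0.

Local Notation L := (Apart mj).
Local Notation SA := (size (Apart mj)).
Definition desc b := nth None (map Some L) b.

Definition CRbody (o1 o2 : option ('I_n * nat * nat)) (sr sc i i' : nat) : C :=
  match o1, o2 with
  | Some (j, k, t), Some (j', k', t') =>
      if (j == j') && (k == k') then
        if t' == t then a j * idE R i i'
        else if t' == t.+1 then idE R i i' else 0
      else 0
  | Some (j, k, t), None =>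
      if (t == k.-1) && (sc == 0%N) then - idE R i i' else 0
  | None, Some (j, k, t) =>
      if (sr == m.-1) && (t == 0%N) then mxe (B j k) i i' else 0
  | None, None =>
      if sr == m.-1 then
        (if @insub _ (fun x => x < m)%N 'I_m sc is Some y then mxe (Cc y) i i' else 0)
      else if sc == sr.+1 then idE R i i' else 0
  end.

Lemma CRblockE r c i i' :
  CRblock Cc a mj B r c i i' = CRbody (desc r) (desc c) (r - SA) (c - SA) i i'.
Proof. by []. Qed.

Definition vi (i : nat) : C := if @insub _ (fun x => x < p)%N 'I_p i is Some y then v y 0 else 0.
Definition gam (o : option ('I_n * nat * nat)) (s : nat) : C :=
  match o with Some (j, k, t) => - (lam - a j) ^- (k - t) | None => lam ^+ s end.

Lemma desc_lt b : (b < SA)%N -> exists q, desc b = Some q.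
Proof.
move=> hb; have : desc b \in map Some L by apply: mem_nth; rewrite size_map.
by case: (desc b) => [q _|/mapP [? _ //]]; exists q.
Qed.

Lemma desc_ge b : (SA <= b)%N -> desc b = None.
Proof. by move=> hb; rewrite /desc nth_default // size_map. Qed.

Lemma split_blocks (G : option ('I_n * nat * nat) -> nat -> C) :
  (forall q s, G (Some q) s = G (Some q) 0%N) ->
  \sum_(0 <= b < SA + m) G (desc b) (b - SA)%N =
  \sum_(q <- L) G (Some q) 0%N + \sum_(0 <= s < m) G None s.
Proof.
move=> HG; rewrite (big_cat_nat _ (n := SA)) ?leq_addr //=; congr (_ + _).
  rewrite -(big_map Some xpredT (fun o => G o 0%N)) (big_nth None) size_map.
  apply: eq_big_nat => b /andP[_ hb]; rewrite -/(desc b).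
  by case: (desc_lt hb) => q ->; rewrite HG.
rewrite -{1}[SA]add0n big_addn addKn; apply: eq_big_nat => s _.
by rewrite desc_ge ?leq_addl // addnK.
Qed.

Lemma idsum i (f : nat -> C) : (i < p)%N -> \sum_(i' < p) idE R i i' * f i' = f i.
Proof.
move=> hi; rewrite (bigD1 (Ordinal hi)) //= /idE eqxx mul1r big1 ?addr0 // => j hj.
suff /negbTE -> : i != j by rewrite mul0r.
by apply: contra hj => /eqP h; apply/eqP; apply: val_inj.
Qed.

Lemma mxsum i (M : 'M[C]_p) (hi : (i < p)%N) :
  \sum_(i' < p) mxe M i i' * vi i' = (M *m v) (Ordinal hi) 0.
Proof.
rewrite mxE; apply: eq_bigr => j _.
by rewrite /mxe /vi (insubT (fun x => x < p)%N hi) valK.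
Qed.

Lemma vi_ord i (hi : (i < p)%N) : vi i = v (Ordinal hi) 0.
Proof. by rewrite /vi (insubT (fun x => x < p)%N hi). Qed.

Lemma alg1 (x y w D : C) : x - y != 0 -> D != 0 ->
  y * (- ((x - y) * D)^-1) * w + - D^-1 * w = x * (- ((x - y) * D)^-1 * w).
Proof. by move=> h1 h2; field; rewrite h1 h2. Qed.

Lemma alg2 (x y w : C) : x - y != 0 ->
  y * (- (x - y)^-1) * w + - w = x * (- (x - y)^-1 * w).
Proof. by move=> h1; field; rewrite h1. Qed.

Lemma row_eq br i (hi : (i < p)%N) (hb : (br < SA + m)%N) :
  \sum_(0 <= b < SA + m) \sum_(i' < p)
     CRbody (desc br) (desc b) (br - SA) (b - SA) i i' * (gam (desc b) (b - SA) * vi i')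
  = lam * (gam (desc br) (br - SA) * vi i).
Proof.
rewrite (@split_blocks (fun (o : option ('I_n * nat * nat)) (s : nat) => \sum_(i' < p) CRbody (desc br) o (br - SA) s i i' * (gam o s * vi i'))) => [|q s]; last by case: q => [[? ?] ?].
case hd: (desc br) => [[[j0 k0] t0]|].
  have hbr : (br < SA)%N by rewrite ltnNge; apply/negP => /desc_ge; rewrite hd.
  have hq : (j0, k0, t0) \in L.
    have : Some (j0, k0, t0) \in map Some L by rewrite -hd; apply: mem_nth; rewrite size_map.
    by rewrite mem_map //; apply: Some_inj.
  have /andP[/andP[hk1 hk2] ht] := mem_Apart hq.
  rewrite sum_Apart.
  have E1 : forall j k t, \sum_(i' < p)
      CRbody (Some (j0, k0, t0)) (Some (j, k, t)) (br - SA) 0 i i' * (gam (Some (j, k, t)) 0 * vi i')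
      = if j == j0 then (if k == k0 then
          (if t == t0 then a j0 * gam (Some (j0, k0, t0)) 0 * vi i else 0) +
          (if t == t0.+1 then gam (Some (j0, k0, t)) 0 * vi i else 0) else 0) else 0.
    move=> j k t /=.
    case: (eqVneq j j0) => [->|hj]; last first.
      by rewrite /= big1 // => *; rewrite mul0r.
    case: (eqVneq k k0) => [->|hk]; last first.
      by rewrite /= big1 // => *; rewrite mul0r.
    rewrite /=.
    case: (eqVneq t t0) => [->|h1].
      rewrite (ltn_eqF (ltnSn t0)) addr0.
      under eq_bigr do rewrite -mulrA mulrCA.
      by rewrite (@idsum i (fun i0 => _ * (_ * vi i0))) // mulrA.
    rewrite add0r; case: (eqVneq t t0.+1) => [->|h2].
      by rewrite (@idsum i (fun i0 => _ * vi i0)).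
    by rewrite big1 // => *; rewrite mul0r.
  rewrite (bigD1 j0) // [X in _ + X + _]big1 ?addr0 => [|j hj]; last first.
    by rewrite big1_seq // => k _; rewrite big1_seq // => t _; rewrite E1 (negbTE hj).
  rewrite (@sum_delta2 _ _ _ k0) => [|k hk]; last first.
    by rewrite big1_seq // => t _; rewrite E1 eqxx (negbTE hk).
  rewrite hk1 ltnS hk2 /=.
  under eq_big_nat do rewrite E1 !eqxx.
  rewrite big_split /= !sum_delta ht /=.
  have E2 : forall s, \sum_(i' < p) CRbody (Some (j0, k0, t0)) None (br - SA) s i i' * (gam None s * vi i')
     = if s == 0%N then (if t0 == k0.-1 then - vi i else 0) else 0.
    move=> s /=; case: (eqVneq s 0%N) => [->|hs]; last first.
      by rewrite andbF big1 // => *; rewrite mul0r.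
    rewrite andbT; case: ifP => _; last by rewrite big1 // => *; rewrite mul0r.
    under eq_bigr do rewrite mulNr -mulrN.
    by rewrite (@idsum i (fun i0 => - (_ * vi i0))) // expr0 mul1r.
  under eq_big_nat do rewrite E2.
  rewrite sum_delta hm /=.
  have hd0 : lam - a j0 != 0 by rewrite subr_eq0 hlam.
  case: (ltnP t0.+1 k0) => h.
    have -> : (t0 == k0.-1) = false by apply/negbTE; lia.
    have -> : (k0 - t0 = (k0 - t0.+1).+1)%N by lia.
    rewrite addr0 exprS alg1 //; exact: expf_neq0.
  have -> : (t0 == k0.-1) = true by apply/eqP; lia.
  have -> : (k0 - t0 = 1)%N by lia.
  by rewrite expr1 addr0 alg2.
have hbr : (SA <= br)%N.
  by rewrite leqNgt; apply/negP => /desc_lt [q]; rewrite hd.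
have hsm : (br - SA < m)%N by lia.
rewrite /=.
case: (eqVneq (br - SA)%N m.-1) => hs; last first.
  rewrite big1_seq ?add0r => [|[[j k] t] _]; last first.
    by rewrite /= /= big1 // => *; rewrite mul0r.
  rewrite (@sum_delta2 _ _ _ (br - SA).+1) => [|s hs']; last first.
    by rewrite /= (negbTE hs') big1 // => *; rewrite mul0r.
  have -> : (0 <= (br - SA).+1 < m)%N by lia.
  rewrite /= eqxx (@idsum i (fun i0 => _ * vi i0)) //.
  by rewrite exprS mulrA.
rewrite sum_Apart (eq_bigr (fun j => \sum_(1 <= k < (mj j).+1) - ((lam - a j)^-k * (B j k *m v) (Ordinal hi) 0))); last first.
  move=> j _; apply: eq_big_nat => k /andP[hk _].
  rewrite (@sum_delta2 _ _ _ 0%N) => [|t ht]; last first.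
    by rewrite /= (negbTE ht) big1 // => *; rewrite mul0r.
  rewrite hk /= subn0.
  under eq_bigr do rewrite mulrCA.
  by rewrite -mulr_sumr mxsum mulNr.
rewrite big_mkord (eq_bigr (fun s : 'I_m => lam^+s * (Cc s *m v) (Ordinal hi) 0)); last first.
  move=> s _; rewrite valK.
  under eq_bigr do rewrite mulrCA.
  by rewrite -mulr_sumr mxsum.
have H := congr1 (fun M : 'M_(p,1) => M (Ordinal hi) 0) hv.
rewrite /= /Rmat !mulmxDl mulNmx -scalemxAl mul1mx !mulmx_suml !mxE !summxE in H.
have H' : lam^+m * v (Ordinal hi) 0 - \sum_(s < m) lam^+s * (Cc s *m v) (Ordinal hi) 0
   + \sum_(j < n) \sum_(1 <= k < (mj j).+1) (lam - a j)^-k * (B j k *m v) (Ordinal hi) 0 = 0.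
  rewrite -[in RHS]H; congr (_ - _ + _).
    by apply: eq_bigr => s _; rewrite -scalemxAl [in RHS]mxE.
  apply: eq_bigr => j _; rewrite mulmx_suml summxE.
  by apply: eq_big_nat => k _; rewrite -scalemxAl [in RHS]mxE.
under eq_bigr do rewrite sumrN.
rewrite sumrN vi_ord hs mulrA -exprS prednK //.
move: H'.
set V := lam^+m * v (Ordinal hi) 0.
set Z := \sum_(s < m) _.
set Y := \sum_(j < n) _.
move=> H'.
apply/eqP; rewrite -subr_eq0; apply/eqP.
transitivity (- (V - Z + Y)); first by ring.
by rewrite H' oppr0.
Qed.

Definition xv : 'cV[C]_(p * Nsize m mj) :=
  \col_r (gam (desc (r %/ p)) (r %/ p - SA) * vi (r %% p)).

Lemma Nsize_eq : Nsize m mj = (SA + m)%N.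
Proof. by rewrite /Nsize size_Apart addnC. Qed.

Lemma CRx : CR Cc a mj B *m xv = lam *: xv.
Proof.
apply/matrixP => r c; rewrite ord1 !mxE.
under eq_bigr do rewrite !mxE CRblockE.
rewrite (@reindex_blocks _ p (Nsize m mj) (fun b i' => CRbody (desc (r %/ p)) (desc b)
   (r %/ p - SA) (b - SA) (r %% p) i' * (gam (desc b) (b - SA) * vi i')) hp).
have hb : (r %/ p < SA + m)%N.
  by move: (ltn_ord r); rewrite ltn_divLR //; move: (nat_of_ord r) => x; rewrite Nsize_eq mulnC.
have := @row_eq (r %/ p) (r %% p) (ltn_pmod r hp) hb; rewrite -Nsize_eq => ->.
by [].
Qed.

Lemma vi_val (i : 'I_p) : vi i = v i 0.
Proof. by rewrite /vi valK. Qed.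

Lemma xv_neq0 : v != 0 -> xv != 0.
Proof.
move=> hv0.
case/boolP: [exists i0 : 'I_p, v i0 0 != 0] => [/existsP [i0 hi0]| /existsPn H]; last first.
  case/negP: hv0; apply/eqP/matrixP => i j; rewrite ord1 mxE.
  by have := H i; rewrite negbK => /eqP.
have hr : (SA * p + i0 < p * Nsize m mj)%N.
  rewrite Nsize_eq mulnDr [(p * SA)%N]mulnC.
  have := leq_pmulr p hm; have := ltn_ord i0; lia.
apply/negP => /eqP H0; have := congr1 (fun M : 'cV_(p * Nsize m mj) => M (Ordinal hr) 0) H0.
rewrite !mxE /= divnMDl // divn_small // addn0 modnMDl modn_small //.
rewrite desc_ge // subnn /= expr0 mul1r vi_val => /eqP; apply/negP.
by [].
Qed.

Lemma eig : v != 0 -> eigenvalue (CR Cc a mj B) lam.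
Proof.
move=> hv0; rewrite /eigenvalue /eigenspace kermx_eq0 row_free_unit.
apply/negP => U.
have : (CR Cc a mj B - lam%:M) *m xv = 0 by rewrite mulmxBl CRx mul_scalar_mx subrr.
move/(congr1 (mulmx (invmx (CR Cc a mj B - lam%:M)))); rewrite mulKmx // mulmx0 => /eqP.
by apply/negP; apply: xv_neq0.
Qed.

End Main.

Theorem theorem3p1 (R : realType) (p m n : nat)
  (Cc : 'I_m -> 'M[R[i]]_p) (a : 'I_n -> R[i]) (mj : 'I_n -> nat)
  (B : 'I_n -> nat -> 'M[R[i]]_p) :
  (1 <= p)%N -> (1 <= m)%N -> (1 <= n)%N ->
  injective a ->
  (forall j, 1 <= mj j)%N ->
  forall lam0 : R[i], rat_eigenvalue Cc a mj B lam0 ->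
  eigenvalue (CR Cc a mj B) lam0.
Proof.
move=> hp hm hn ha hmj lam0 [hl [v [hv0 hv]]].
exact: (eig hp hm hl hv hv0).
Qed.
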